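(* Let $f:[0,1]\to\mathbb R$ satisfy $|f(x')-f(x'')|\le H|x'-x''|^{1/N}$, let $X^*$ be the set of global minimizers of $f$ on $[0,1]$, apply PLT indefinitely (stopping rule disregarded) with $p(l)\le Q<\infty$ for all $l>1$, and let $\{x^q\}$ be the trial sequence. Suppose that for every $x^*\in X^*$ the condition of Theorem 2 holds, i.e. there is an infinite set of iteration numbers $\{h\}=\{h(x^* )\}$ such that for all $l\in\{h\}$, with $j=j(l)$ the index of an interval $[x_{j-1},x_j]$ containing $x^*$, one has $4^{1-1/N}K_j^2\ge M_j^2$ and $r\mu_j\ge 2^{1-1/N}K_j+(4^{1-1/N}K_j^2-M_j^2)^{1/2}$, where $K_j=\max\{(z_{j-1}-f(x^* ))(x^*-x_{j-1})^{-1/N},(z_j-f(x^* ))(x_j-x^* )^{-1/N}\}$ and $M_j=|z_{j-1}-z_j|(x_j-x_{j-1})^{-1/N}$. Then the set of limit points of $\{x^q\}$ coincides with $X^*$.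
   Context: Algorithm PLT (parallel information algorithm with local tuning) for minimizing $f$ on $[0,1]$; parameters: integer $N\ge1$, reliability parameter $r>1$, small number $\xi>0$. A ''trial'' is an evaluation of $f$ at a point. Step 0: perform $q(1)>1$ initial trials at $x^1=0$, $x^2=1$ and some interior points $x^3,\dots,x^{q(1)}\in(0,1)$; set $l=1$. At iteration $l$, let $q=q(l)$ be the number of trials made so far. Step 1: order all trial points as $0=x_1<x_2<\dots<x_q=1$ and set $z_i=f(x_i)$. Step 2: for $2\le j\le q$ compute $\mu_j=\max\{\lambda_j,\gamma_j,\xi\}$, where $\lambda_j=\max\{|z_i-z_{i-1}|/(x_i-x_{i-1})^{1/N}: i\in I_j\}$ with $I_2=\{2,3\}$, $I_j=\{j-1,j,j+1\}$ for $3\le j\le q-1$, $I_q=\{q-1,q\}$; and $\gamma_j=\mu\,(x_j-x_{j-1})^{1/N}/(X^{\max})^{1/N}$ with $\mu=\max\{|z_i-z_{i-1}|/(x_i-x_{i-1})^{1/N}:2\le i\le q\}$ and $X^{\max}=\max\{x_i-x_{i-1}:2\le i\le q\}$. Step 3: for $2\le j\le q$ compute the characteristic $R(j)=r\mu_j(x_j-x_{j-1})^{1/N}+\frac{(z_j-z_{j-1})^2}{r\mu_j(x_j-x_{j-1})^{1/N}}-(z_j+z_{j-1})$. Step 4: choose $p=p(l+1)\le q(l)-1$ and distinct indices $t_1,\dots,t_p$ being the indices of the $p$ largest characteristics ($t_1=\arg\max\{R(i):1<i\le q\}$, $t_k=\arg\max\{R(i):1<i\le q,\ i\ne t_s, 1\le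 s\le k-1\}$); the new trial points are $x^{q+k}=\tfrac12(x_{t_k-1}+x_{t_k})-\frac{1}{2r}\left(\frac{|z_{t_k}-z_{t_k-1}|}{\mu_{t_k}}\right)^N\operatorname{sign}(z_{t_k}-z_{t_k-1})$, $1\le k\le p$. Step 5: evaluate $f$ at these $p$ points in parallel, set $q(l+1)=q(l)+p(l+1)$, $l\leftarrow l+1$, and return to Step 1. *)

(* Defs.v *)
From Stdlib Require Import Reals Lra Lia List.
Import ListNotations.
Open Scope R_scope.

(* N-th root of a nonnegative real, with the convention nroot N d = 0 for d <= 0. *)
Definition nroot (N : nat) (d : R) : R :=
  match Rle_dec d 0 with
  | left _ => 0
  | right _ => Rpower d (/ INR N)
  end.

Definition sgn (y : R) : R :=
  match Rlt_dec 0 y with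
  | left _ => 1
  | right _ => match Rlt_dec y 0 with left _ => -1 | right _ => 0 end
  end.

(* maximum of a list of nonnegative reals (all lists used below are nonempty
   lists of nonnegative numbers, so base value 0 is harmless) *)
Definition maxl (l : list R) : R := fold_right Rmax 0 l.

(* Quantities of Steps 2-4 at one iteration.  q = number of trials so far,
   s : nat -> R the ordered trial points s 1 < ... < s q, z_i = f (s i). *)
Section PLTStep.
Variables (N : nat) (r xi : R) (f : R -> R) (q : nat) (s : nat -> R).

Definition dx (i : nat) : R := s i - s (i - 1)%nat.

Definition slope (i : nat) : R :=
  Rabs (f (s i) - f (s (i - 1)%nat)) / nroot N (dx i).

(* I_j = {j-1, j, j+1} intersected with {2,...,q}; this is exactly
   I_2 = {2,3}, I_j = {j-1,j,j+1}, I_q = {q-1,q} of the paper when q >= 3 *)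
Definition lam (j : nat) : R :=
  maxl (map slope (filter (fun i => andb (2 <=? i)%nat (i <=? q)%nat)
                          [(j - 1)%nat; j; (j + 1)%nat])).

Definition mu_all : R := maxl (map slope (seq 2 (q - 1))).

Definition Xmax : R := maxl (map dx (seq 2 (q - 1))).

Definition gam (j : nat) : R := mu_all * nroot N (dx j) / nroot N Xmax.

Definition mu (j : nat) : R := Rmax (Rmax (lam j) (gam j)) xi.

Definition charR (j : nat) : R :=
  r * mu j * nroot N (dx j)
  + (f (s j) - f (s (j - 1)%nat)) ^ 2 / (r * mu j * nroot N (dx j))
  - (f (s j) + f (s (j - 1)%nat)).

Definition newpt (j : nat) : R :=
  (s (j - 1)%nat + s j) / 2
  - / (2 * r) * (Rabs (f (s j) - f (s (j - 1)%nat)) / mu j) ^ N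
    * sgn (f (s j) - f (s (j - 1)%nat)).

(* Step 4-5: q' = q(l+1) trials after the iteration; x the trial sequence. *)
Definition plt_step (x : nat -> R) (q' : nat) : Prop :=
  (1 <= q' - q <= q - 1)%nat /\
  exists t : nat -> nat,
    (forall k, (1 <= k <= q' - q)%nat ->
       (2 <= t k <= q)%nat /\
       (forall k', (1 <= k' < k)%nat -> t k' <> t k) /\
       (forall i, (2 <= i <= q)%nat ->
          (forall k', (1 <= k' < k)%nat -> t k' <> i) ->
          charR i <= charR (t k))) /\
    (forall k, (1 <= k <= q' - q)%nat -> x (q + k)%nat = newpt (t k)).

End PLTStep.

Definition ordered_trials (q : nat) (s : nat -> R) (x : nat -> R) : Prop :=
  (forall i, (1 <= i < q)%nat -> s i < s (S i)) /\
  (forall y, (exists i, (1 <= i <= q)%nat /\ s i = y) <->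
             (exists k, (1 <= k <= q)%nat /\ x k = y)).

(* A (complete, infinite) run of PLT with parameters N, r, xi on f:
   x k = k-th trial point (k >= 1), q l = q(l) (l >= 1),
   xs l = ordered trial points at iteration l. *)
Definition plt_run (N : nat) (r xi : R) (f : R -> R)
    (x : nat -> R) (q : nat -> nat) (xs : nat -> nat -> R) : Prop :=
  (1 < q 1%nat)%nat /\
  x 1%nat = 0 /\ x 2%nat = 1 /\
  (forall k, (3 <= k <= q 1%nat)%nat -> 0 < x k < 1) /\
  (forall l, (1 <= l)%nat -> ordered_trials (q l) (xs l) x) /\
  (forall l, (1 <= l)%nat -> plt_step N r xi f (q l) (xs l) x (q (S l))).

Definition holder (N : nat) (H : R) (f : R -> R) : Prop :=
  forall x1 x2, 0 <= x1 <= 1 -> 0 <= x2 <= 1 ->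
    Rabs (f x1 - f x2) <= H * nroot N (Rabs (x1 - x2)).

Definition global_min (f : R -> R) (y : R) : Prop :=
  0 <= y <= 1 /\ forall w, 0 <= w <= 1 -> f y <= f w.

Definition limit_point (x : nat -> R) (y : R) : Prop :=
  forall eps, 0 < eps -> forall n, exists k, (n <= k)%nat /\ Rabs (x k - y) < eps.

Definition Kj (N : nat) (f : R -> R) (s : nat -> R) (j : nat) (xst : R) : R :=
  Rmax ((f (s (j - 1)%nat) - f xst) / nroot N (xst - s (j - 1)%nat))
       ((f (s j) - f xst) / nroot N (s j - xst)).

Definition Mj (N : nat) (f : R -> R) (s : nat -> R) (j : nat) : R :=
  Rabs (f (s (j - 1)%nat) - f (s j)) / nroot N (s j - s (j - 1)%nat).

Definition thm2_cond (N : nat) (r xi : R) (f : R -> R) (q : nat) (s : nat -> R)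
    (xst : R) : Prop :=
  exists j, (2 <= j <= q)%nat /\ s (j - 1)%nat <= xst <= s j /\
    let K := Kj N f s j xst in
    let M := Mj N f s j in
    Rpower 4 (1 - / INR N) * K ^ 2 >= M ^ 2 /\
    r * mu N xi f q s j >=
      Rpower 2 (1 - / INR N) * K + sqrt (Rpower 4 (1 - / INR N) * K ^ 2 - M ^ 2).

(* Main.v *)
Require Import Defs.
From Stdlib Require Import Reals Lra Lia List Psatz ZArith Classical.
Import ListNotations.
Open Scope R_scope.

Lemma INR_N_pos N : (1 <= N)%nat -> 1 <= INR N.
Proof. intros; apply (le_INR 1); auto. Qed.

Lemma nroot_nonneg N d : 0 <= nroot N d.
Proof. unfold nroot; destruct (Rle_dec d 0); [lra|unfold Rpower; left; apply exp_pos]. Qed.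

Lemma nroot_pos N d : 0 < d -> 0 < nroot N d.
Proof. intros; unfold nroot; destruct (Rle_dec d 0); [lra|unfold Rpower; apply exp_pos]. Qed.

Lemma nroot_0 N d : d <= 0 -> nroot N d = 0.
Proof. intros; unfold nroot; destruct (Rle_dec d 0); lra. Qed.

Lemma nroot_pow N d : (1 <= N)%nat -> 0 <= d -> nroot N d ^ N = d.
Proof.
  intros HN Hd. unfold nroot; destruct (Rle_dec d 0).
  - assert (d = 0) by lra; subst. destruct N; [lia|simpl; ring].
  - rewrite <- Rpower_pow by (unfold Rpower; apply exp_pos).
    rewrite Rpower_mult. rewrite Rinv_l. apply Rpower_1; lra.
    pose proof (INR_N_pos N HN); lra.
Qed.

Lemma nroot_le N a b : (1 <= N)%nat -> 0 <= a <= b -> nroot N a <= nroot N b.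
Proof.
  intros HN [Ha Hab]. destruct Ha as [Ha|Ha].
  - unfold nroot; destruct (Rle_dec a 0); destruct (Rle_dec b 0); try lra.
    apply Rle_Rpower_l; [|lra]. left; apply Rinv_0_lt_compat; pose proof (INR_N_pos N HN); lra.
  - subst. rewrite nroot_0 by lra. apply nroot_nonneg.
Qed.

Lemma nroot_of_pow N t : (1 <= N)%nat -> 0 <= t -> nroot N (t ^ N) = t.
Proof.
  intros HN Ht. destruct Ht as [Ht|Ht].
  - unfold nroot. destruct (Rle_dec (t^N) 0) as [h|h].
    + pose proof (pow_lt t N Ht); lra.
    + rewrite <- Rpower_pow by lra. rewrite Rpower_mult. rewrite Rinv_r.
      apply Rpower_1; lra. pose proof (INR_N_pos N HN); lra.
  - subst. apply nroot_0. destruct N; [lia|simpl; lra].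
Qed.

Lemma nroot_1 d : 0 <= d -> nroot 1 d = d.
Proof.
  intros Hd. rewrite <- (nroot_of_pow 1 d) at 2 by (lia||lra). f_equal. simpl; ring.
Qed.

Lemma nroot_le_inv N a b : (1 <= N)%nat -> 0 <= a -> 0 <= b -> nroot N a <= nroot N b -> a <= b.
Proof.
  intros HN Ha Hb H. rewrite <- (nroot_pow N a), <- (nroot_pow N b) by auto.
  apply pow_incr; split; auto; apply nroot_nonneg.
Qed.


Lemma maxl_ge l a : In a l -> a <= maxl l.
Proof.
  induction l as [|b l IH]; simpl; [tauto|].
  intros [->|H]; [apply Rmax_l|]. eapply Rle_trans; [apply IH; auto|apply Rmax_r].
Qed.

Lemma maxl_le l B : 0 <= B -> (forall a, In a l -> a <= B) -> maxl l <= B.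
Proof.
  induction l as [|b l IH]; simpl; intros HB H; [lra|].
  apply Rmax_lub; auto.
Qed.

Lemma maxl_nonneg l : 0 <= maxl l.
Proof. induction l; simpl; [lra|]. eapply Rle_trans; [apply IHl|apply Rmax_r]. Qed.

Lemma ord_lt q s x : ordered_trials q s x ->
  forall i i', (1 <= i)%nat -> (i < i')%nat -> (i' <= q)%nat -> s i < s i'.
Proof.
  intros [Hs _] i i' Hi Hii'. induction Hii' as [|i' Hle IH]; intros Hq.
  - apply Hs; lia.
  - eapply Rlt_trans; [apply IH; lia|]. apply Hs; lia.
Qed.

Lemma ord_le q s x : ordered_trials q s x ->
  forall i i', (1 <= i)%nat -> (i <= i')%nat -> (i' <= q)%nat -> s i <= s i'.
Proof.
  intros Ho i i' H1 H2 H3. destruct (Nat.eq_dec i i'); [subst; lra|].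
  left; eapply ord_lt; eauto; lia.
Qed.

Lemma dx_pos q s x j : ordered_trials q s x -> (2 <= j <= q)%nat -> 0 < dx s j.
Proof.
  intros Ho Hj. unfold dx. pose proof (ord_lt q s x Ho (j-1) j ltac:(lia) ltac:(lia) ltac:(lia)). lra.
Qed.

Lemma mu_ge_xi N xi f q s j : xi <= mu N xi f q s j.
Proof. unfold mu; apply Rmax_r. Qed.

Lemma mu_ge_slope N xi f q s j : (2 <= j <= q)%nat -> slope N f s j <= mu N xi f q s j.
Proof.
  intros Hj. unfold mu. eapply Rle_trans; [|apply Rmax_l]. eapply Rle_trans; [|apply Rmax_l].
  unfold lam. apply maxl_ge. apply in_map. apply filter_In. split.
  - simpl; auto.
  - apply andb_true_intro; split; apply Nat.leb_le; lia.
Qed.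

Lemma abs_le_mu_D N xi f q s x j : (1 <= N)%nat -> ordered_trials q s x -> (2 <= j <= q)%nat ->
  Rabs (f (s j) - f (s (j-1)%nat)) <= mu N xi f q s j * nroot N (dx s j).
Proof.
  intros HN Ho Hj. pose proof (mu_ge_slope N xi f q s j Hj) as H. unfold slope in H.
  pose proof (nroot_pos N _ (dx_pos q s x j Ho Hj)) as HD.
  apply (Rmult_le_compat_r (nroot N (dx s j))) in H; [|lra].
  unfold Rdiv in H. rewrite Rmult_assoc, Rinv_l, Rmult_1_r in H; lra.
Qed.

Lemma newpt_loc N r xi f q s x j : (1 <= N)%nat -> 1 < r -> 0 < xi -> ordered_trials q s x -> (2 <= j <= q)%nat ->
  s (j-1)%nat + (1 - / r) / 2 * dx s j <= newpt N r xi f q s j <= s j - (1 - / r) / 2 * dx s j.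
Proof.
  intros HN Hr Hxi Ho Hj. pose proof (dx_pos q s x j Ho Hj) as Hd.
  pose proof (abs_le_mu_D N xi f q s x j HN Ho Hj) as HA.
  pose proof (mu_ge_xi N xi f q s j) as Hm.
  set (m := mu N xi f q s j) in *. set (A := Rabs (f (s j) - f (s (j-1)%nat))) in *.
  set (d := dx s j) in *.
  assert (HP : 0 <= (A / m) ^ N <= d).
  { assert (0 <= A / m <= nroot N d).
    { split. unfold Rdiv; apply Rmult_le_pos; [apply Rabs_pos|left; apply Rinv_0_lt_compat; lra].
      apply Rmult_le_reg_r with m; [lra|]. unfold Rdiv; rewrite Rmult_assoc, Rinv_l by lra. lra. }
    split. apply pow_le; lra. rewrite <- (nroot_pow N d) by (auto; lra). apply pow_incr; auto. }
  unfold newpt. fold m. fold A. fold d in HP.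
  assert (Hir : 0 < / (2 * r)) by (apply Rinv_0_lt_compat; lra).
  assert (Hb : / (2*r) * (A/m)^N <= d / (2*r)).
  { unfold Rdiv. rewrite Rmult_comm. apply Rmult_le_compat_r; lra. }
  assert (Hb0 : 0 <= / (2*r) * (A/m)^N) by (apply Rmult_le_pos; lra).
  assert (E : d / (2*r) = / r / 2 * d) by (field; lra).
  unfold d, dx in *.
  unfold sgn; destruct (Rlt_dec 0 _); [|destruct (Rlt_dec _ 0)]; lra.
Qed.


Lemma q_incr N r xi f x q xs : plt_run N r xi f x q xs -> forall l, (1 <= l)%nat -> (q l < q (S l))%nat.
Proof. intros (_&_&_&_&_&Hs) l Hl. destruct (Hs l Hl) as [H _]. lia. Qed.

Lemma q_ge N r xi f x q xs : plt_run N r xi f x q xs -> forall l, (1 <= l)%nat -> (l < q l)%nat.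
Proof.
  intros Hr l Hl. induction Hl as [|l Hl IH].
  - destruct Hr as [H _]; lia.
  - pose proof (q_incr _ _ _ _ _ _ _ Hr l Hl); lia.
Qed.

Lemma q_mono N r xi f x q xs : plt_run N r xi f x q xs -> forall l l', (1 <= l)%nat -> (l <= l')%nat -> (q l <= q l')%nat.
Proof.
  intros Hr l l' Hl H. induction H as [|l' H IH]; [lia|].
  pose proof (q_incr _ _ _ _ _ _ _ Hr l' ltac:(lia)); lia.
Qed.

Lemma time_of N r xi f x q xs : plt_run N r xi f x q xs -> forall k, (q 1%nat < k)%nat ->
  exists l, (1 <= l)%nat /\ (q l < k <= q (S l))%nat.
Proof.
  intros Hr k Hk.
  assert (G : forall l, (1 <= l)%nat -> (k <= q l)%nat -> exists l', (1 <= l' < l)%nat /\ (q l' < k <= q (S l'))%nat).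
  { intros l Hl. induction Hl as [|l Hl IH]; intros Hkl; [lia|].
    destruct (Nat.le_gt_cases k (q l)) as [h|h].
    - destruct (IH h) as [l' ?]; exists l'; intuition lia.
    - exists l; split; lia. }
  destruct (G k ltac:(lia)) as [l' [? ?]]. pose proof (q_ge _ _ _ _ _ _ _ Hr k ltac:(lia)); lia.
  exists l'; split; [lia|auto].
Qed.

Lemma s_is_trial q s x : ordered_trials q s x -> forall i, (1 <= i <= q)%nat -> exists k, (1 <= k <= q)%nat /\ x k = s i.
Proof. intros [_ H] i Hi. apply H. eauto. Qed.

Lemma trial_is_s q s x : ordered_trials q s x -> forall k, (1 <= k <= q)%nat -> exists i, (1 <= i <= q)%nat /\ s i = x k.
Proof. intros [_ H] k Hk. apply H. eauto. Qed.

Lemma trial_outside q s x : ordered_trials q s x -> forall j k, (2 <= j <= q)%nat -> (1 <= k <= q)%nat ->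
  x k <= s (j-1)%nat \/ s j <= x k.
Proof.
  intros Ho j k Hj Hk. destruct (trial_is_s q s x Ho k Hk) as [i [Hi <-]].
  destruct (Nat.le_gt_cases i (j-1)).
  - left; eapply ord_le; eauto; lia.
  - right; eapply ord_le; eauto; lia.
Qed.

Lemma gpos r : 1 < r -> 0 < (1 - / r) / 2.
Proof. intros. assert (/ r < 1) by (rewrite <- Rinv_1; apply Rinv_lt_contravar; lra). lra. Qed.

Lemma newpt_strict N r xi f q s x j : (1 <= N)%nat -> 1 < r -> 0 < xi -> ordered_trials q s x -> (2 <= j <= q)%nat ->
  s (j-1)%nat < newpt N r xi f q s j < s j.
Proof.
  intros. pose proof (newpt_loc N r xi f q s x j) as HL. pose proof (gpos r).
  pose proof (dx_pos q s x j). pose proof (Rmult_lt_0_compat ((1 - /r)/2) (dx s j)). intuition lra.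
Qed.

Lemma newpt_inj N r xi f q s x j j' : (1 <= N)%nat -> 1 < r -> 0 < xi -> ordered_trials q s x ->
  (2 <= j <= q)%nat -> (2 <= j' <= q)%nat -> j <> j' -> newpt N r xi f q s j <> newpt N r xi f q s j'.
Proof.
  intros HN Hr Hxi Ho Hj Hj' Hne.
  pose proof (newpt_strict N r xi f q s x j HN Hr Hxi Ho Hj).
  pose proof (newpt_strict N r xi f q s x j' HN Hr Hxi Ho Hj').
  destruct (Nat.lt_gt_cases j j') as [[h|h] _]; auto.
  - pose proof (ord_le q s x Ho j (j'-1) ltac:(lia) ltac:(lia) ltac:(lia)); lra.
  - pose proof (ord_le q s x Ho j' (j-1) ltac:(lia) ltac:(lia) ltac:(lia)); lra.
Qed.

Lemma trials01 N r xi f x q xs : (1 <= N)%nat -> 1 < r -> 0 < xi -> plt_run N r xi f x q xs ->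
  forall k, (1 <= k)%nat -> 0 <= x k <= 1.
Proof.
  intros HN Hr Hxi Hrun k. induction k as [k IH] using (well_founded_induction Wf_nat.lt_wf). intros Hk.
  destruct (Nat.le_gt_cases k (q 1%nat)) as [h|h].
  - destruct Hrun as (_&H1&H2&H3&_).
    destruct (Nat.eq_dec k 1); [subst; lra|]. destruct (Nat.eq_dec k 2); [subst; lra|].
    pose proof (H3 k ltac:(lia)); lra.
  - destruct (time_of _ _ _ _ _ _ _ Hrun k h) as [l [Hl Hkl]].
    pose proof Hrun as (_&_&_&_&Hord&Hst).
    destruct (Hst l Hl) as [Hp [t [Ht Hx]]].
    specialize (Ht (k - q l)%nat ltac:(lia)). specialize (Hx (k - q l)%nat ltac:(lia)).
    replace (q l + (k - q l))%nat with k in Hx by lia. rewrite Hx.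
    destruct Ht as [Ht _].
    pose proof (newpt_strict N r xi f (q l) (xs l) x (t (k - q l)%nat) HN Hr Hxi (Hord l Hl) Ht).
    destruct (s_is_trial _ _ _ (Hord l Hl) (t (k - q l) - 1)%nat ltac:(lia)) as [k1 [Hk1 E1]].
    destruct (s_is_trial _ _ _ (Hord l Hl) (t (k - q l))%nat ltac:(lia)) as [k2 [Hk2 E2]].
    pose proof (IH k1 ltac:(lia) ltac:(lia)). pose proof (IH k2 ltac:(lia) ltac:(lia)).
    rewrite <- E1, <- E2 in *. lra.
Qed.

Lemma new_distinct N r xi f x q xs : (1 <= N)%nat -> 1 < r -> 0 < xi -> plt_run N r xi f x q xs ->
  forall k, (q 1%nat < k)%nat -> 0 < x k /\ forall k', (1 <= k' < k)%nat -> x k <> x k'.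
Proof.
  intros HN Hr Hxi Hrun k h.
  destruct (time_of _ _ _ _ _ _ _ Hrun k h) as [l [Hl Hkl]].
  pose proof Hrun as (_&_&_&_&Hord&Hst).
  destruct (Hst l Hl) as [Hp [t [Ht Hx]]].
  pose proof (Ht (k - q l)%nat ltac:(lia)) as [Htk [Hdis _]].
  pose proof (Hx (k - q l)%nat ltac:(lia)) as Hxk.
  replace (q l + (k - q l))%nat with k in Hxk by lia.
  pose proof (newpt_strict N r xi f (q l) (xs l) x _ HN Hr Hxi (Hord l Hl) Htk) as Hin.
  rewrite <- Hxk in Hin. split.
  - destruct (s_is_trial _ _ _ (Hord l Hl) (t (k - q l) - 1)%nat ltac:(lia)) as [k1 [Hk1 E1]].
    pose proof (trials01 N r xi f x q xs HN Hr Hxi Hrun k1 ltac:(lia)). rewrite <- E1 in Hin. lra.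
  - intros k' Hk'. destruct (Nat.le_gt_cases k' (q l)) as [h'|h'].
    + pose proof (trial_outside _ _ _ (Hord l Hl) (t (k - q l)%nat) k' Htk ltac:(lia)). intro E; rewrite E in Hin; lra.
    + pose proof (Ht (k' - q l)%nat ltac:(lia)) as [Htk' _].
      pose proof (Hx (k' - q l)%nat ltac:(lia)) as Hxk'.
      replace (q l + (k' - q l))%nat with k' in Hxk' by lia.
      rewrite Hxk, Hxk'. apply (newpt_inj N r xi f (q l) (xs l) x); auto.
      intro E. apply (Hdis (k' - q l)%nat ltac:(lia)). auto.
Qed.




Lemma g_lower a D : 0 < a -> 2 * Rabs D <= a + D ^ 2 / a.
Proof.
  intros Ha. assert (E: D^2 = Rabs D * Rabs D) by (rewrite <- Rabs_mult; simpl; rewrite Rmult_1_r; symmetry; apply Rabs_right; nra).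
  rewrite E. apply Rmult_le_reg_r with a; auto.
  rewrite Rmult_plus_distr_r.
  assert (X: Rabs D * Rabs D / a * a = Rabs D * Rabs D) by (field; lra). rewrite X.
  pose proof (pow2_ge_0 (a - Rabs D)). nra.
Qed.

Lemma g_upper a D : 0 < a -> Rabs D <= a -> D ^ 2 / a <= Rabs D.
Proof.
  intros Ha H. assert (E: D^2 = Rabs D * Rabs D) by (rewrite <- Rabs_mult; simpl; rewrite Rmult_1_r; symmetry; apply Rabs_right; nra).
  rewrite E. apply Rmult_le_reg_r with a; auto.
  assert (X: Rabs D * Rabs D / a * a = Rabs D * Rabs D) by (field; lra). rewrite X.
  pose proof (Rabs_pos D). nra.
Qed.

Lemma slope_le_H N H f q s x i : (1 <= N)%nat -> 0 <= H -> ordered_trials q s x ->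
  (forall i, (1 <= i <= q)%nat -> 0 <= s i <= 1) -> holder N H f ->
  (2 <= i <= q)%nat -> slope N f s i <= H.
Proof.
  intros HN HH Ho H01 Hh Hi. unfold slope.
  pose proof (dx_pos q s x i Ho Hi) as Hd. pose proof (nroot_pos N _ Hd) as HD.
  apply Rmult_le_reg_r with (nroot N (dx s i)); auto.
  unfold Rdiv; rewrite Rmult_assoc, Rinv_l, Rmult_1_r by lra.
  pose proof (Hh (s i) (s (i-1)%nat) (H01 i ltac:(lia)) (H01 (i-1)%nat ltac:(lia))) as Hx0.
  unfold dx in *. rewrite (Rabs_right (s i - _)) in Hx0 by lra. lra.
Qed.

Lemma mu_le_C N xi H f q s x j : (1 <= N)%nat -> 0 <= H -> ordered_trials q s x ->
  (forall i, (1 <= i <= q)%nat -> 0 <= s i <= 1) -> holder N H f ->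
  (2 <= j <= q)%nat -> mu N xi f q s j <= Rmax H xi.
Proof.
  intros HN HH Ho H01 Hh Hj.
  assert (Hall : mu_all N f q s <= H).
  { apply maxl_le; auto. intros a Ha. apply in_map_iff in Ha. destruct Ha as [i [<- Hi]].
    apply in_seq in Hi. eapply slope_le_H; eauto; lia. }
  assert (Hlam : lam N f q s j <= H).
  { apply maxl_le; auto. intros a Ha. apply in_map_iff in Ha. destruct Ha as [i [<- Hi]].
    apply filter_In in Hi. destruct Hi as [_ Hi]. apply andb_prop in Hi. destruct Hi as [A B].
    apply Nat.leb_le in A, B. eapply slope_le_H; eauto; lia. }
  assert (Hgam : gam N f q s j <= H).
  { unfold gam. pose proof (dx_pos q s x j Ho Hj) as Hd.
    assert (Hdx : dx s j <= Xmax q s).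
    { apply maxl_ge. apply in_map. apply in_seq. lia. }
    pose proof (nroot_pos N _ Hd).
    pose proof (nroot_le N _ _ HN (conj (Rlt_le _ _ Hd) Hdx)).
    assert (0 <= mu_all N f q s) by apply maxl_nonneg.
    assert (nroot N (dx s j) / nroot N (Xmax q s) <= 1).
    { apply Rmult_le_reg_r with (nroot N (Xmax q s)); [lra|].
      unfold Rdiv; rewrite Rmult_assoc, Rinv_l by lra. lra. }
    unfold Rdiv in *. rewrite Rmult_assoc. 
    assert (0 <= nroot N (dx s j) * / nroot N (Xmax q s)).
    { apply Rmult_le_pos; [lra|left; apply Rinv_0_lt_compat; lra]. }
    nra. }
  pose proof (Rmax_l H xi). pose proof (Rmax_r H xi).
  unfold mu. apply Rmax_lub; [apply Rmax_lub|]; lra.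
Qed.

Lemma charR_lower N r xi f q s x j : (1 <= N)%nat -> 1 < r -> 0 < xi -> ordered_trials q s x ->
  (2 <= j <= q)%nat -> -2 * f (s j) <= charR N r xi f q s j.
Proof.
  intros HN Hr Hxi Ho Hj. unfold charR.
  pose proof (dx_pos q s x j Ho Hj) as Hd. pose proof (nroot_pos N _ Hd) as HD.
  pose proof (mu_ge_xi N xi f q s j).
  assert (Ha : 0 < r * mu N xi f q s j * nroot N (dx s j)) by (apply Rmult_lt_0_compat; [nra|auto]).
  pose proof (g_lower _ (f (s j) - f (s (j-1)%nat)) Ha).
  pose proof (Rle_abs (f (s (j-1)%nat) - f (s j))). rewrite Rabs_minus_sym in H1.
  set (A := (f (s j) - f (s (j-1)%nat))^2 / _) in *. set (B := r * _ * _) in *. pose proof (Rabs_pos (f (s j) - f (s (j-1)%nat))). lra.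
Qed.

Lemma charR_upper N r xi H f q s x j : (1 <= N)%nat -> 1 < r -> 0 < xi -> 0 <= H -> ordered_trials q s x ->
  (forall i, (1 <= i <= q)%nat -> 0 <= s i <= 1) -> holder N H f ->
  (2 <= j <= q)%nat ->
  charR N r xi f q s j <= (r * Rmax H xi + H) * nroot N (dx s j) - f (s j) - f (s (j-1)%nat).
Proof.
  intros HN Hr Hxi HH Ho H01 Hh Hj. unfold charR.
  pose proof (dx_pos q s x j Ho Hj) as Hd. pose proof (nroot_pos N _ Hd) as HD.
  pose proof (mu_ge_xi N xi f q s j).
  pose proof (mu_le_C N xi H f q s x j HN HH Ho H01 Hh Hj).
  pose proof (abs_le_mu_D N xi f q s x j HN Ho Hj).
  assert (Ha : 0 < r * mu N xi f q s j * nroot N (dx s j)) by (apply Rmult_lt_0_compat; [nra|auto]).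
  assert (Habs : Rabs (f (s j) - f (s (j-1)%nat)) <= r * mu N xi f q s j * nroot N (dx s j)).
  { eapply Rle_trans; [eauto|]. rewrite (Rmult_comm r), Rmult_assoc, (Rmult_comm r), <- Rmult_assoc.
    assert (0 <= mu N xi f q s j * nroot N (dx s j)) by nra. nra. }
  pose proof (g_upper _ _ Ha Habs).
  pose proof (slope_le_H N H f q s x j HN HH Ho H01 Hh Hj) as Hsl. unfold slope in Hsl.
  assert (Rabs (f (s j) - f (s (j-1)%nat)) <= H * nroot N (dx s j)).
  { apply Rmult_le_compat_r with (r := nroot N (dx s j)) in Hsl; [|lra].
    unfold Rdiv in Hsl; rewrite Rmult_assoc, Rinv_l, Rmult_1_r in Hsl by lra. lra. }
  assert (r * mu N xi f q s j * nroot N (dx s j) <= r * Rmax H xi * nroot N (dx s j)).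
  { apply Rmult_le_compat_r; [lra|]. apply Rmult_le_compat_l; lra. }
  lra.
Qed.


Definition lamN (N : nat) : R := Rpower 2 (1 - / INR N).

Lemma lamN_sq N : Rpower 4 (1 - / INR N) = lamN N ^ 2.
Proof.
  unfold lamN. simpl. rewrite Rmult_1_r. rewrite Rpower_mult_distr by lra. f_equal; lra.
Qed.

Lemma lamN_pos N : 0 < lamN N.
Proof. unfold lamN, Rpower; apply exp_pos. Qed.

Lemma lamN_1 : lamN 1 = 1.
Proof. unfold lamN. simpl. replace (1 - / 1) with 0 by (rewrite Rinv_1; ring). apply Rpower_O; lra. Qed.

Lemma lamN_gt1 N : (2 <= N)%nat -> 1 < lamN N.
Proof.
  intros HN. unfold lamN, Rpower. rewrite <- exp_0 at 1. apply exp_increasing.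
  assert (H2 : 2 <= INR N) by (apply (le_INR 2); auto).
  assert (/ INR N < 1) by (rewrite <- Rinv_1; apply Rinv_lt_contravar; lra).
  pose proof ln_lt_2. apply Rmult_lt_0_compat; lra.
Qed.

Definition c0N (N : nat) : R := if Nat.eq_dec N 1 then 1 else lamN N - 1.

Lemma c0N_pos N : (1 <= N)%nat -> 0 < c0N N.
Proof.
  intros. unfold c0N. destruct (Nat.eq_dec N 1); [lra|]. pose proof (lamN_gt1 N ltac:(lia)); lra.
Qed.

Lemma K_facts N f s j y : (1 <= N)%nat -> s (j-1)%nat <= y -> y <= s j ->
  0 <= f (s (j-1)%nat) - f y -> 0 <= f (s j) - f y ->
  0 <= Kj N f s j y /\
  f (s (j-1)%nat) - f y <= Kj N f s j y * nroot N (y - s (j-1)%nat) /\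
  f (s j) - f y <= Kj N f s j y * nroot N (s j - y).
Proof.
  intros HN H1 H2 Hu Hv. unfold Kj.
  set (u := f (s (j-1)%nat) - f y) in *. set (v := f (s j) - f y) in *.
  set (A := nroot N (y - s (j-1)%nat)) in *. set (B := nroot N (s j - y)) in *.
  assert (TA : 0 <= u / A /\ u <= Rmax (u/A) (v/B) * A).
  { destruct (Rle_lt_dec (y - s (j-1)%nat) 0) as [h|h].
    - assert (E : s (j-1)%nat = y) by lra. unfold u. rewrite E. unfold A. rewrite nroot_0 by lra.
      rewrite Rminus_diag. unfold Rdiv. rewrite Rmult_0_l, Rmult_0_r. lra.
    - assert (0 < A) by (apply nroot_pos; lra). split. unfold Rdiv; apply Rmult_le_pos; [lra|left; apply Rinv_0_lt_compat; lra].
      replace u with (u / A * A) at 1 by (field; lra). apply Rmult_le_compat_r; [lra|apply Rmax_l]. }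
  assert (TB : 0 <= v / B /\ v <= Rmax (u/A) (v/B) * B).
  { destruct (Rle_lt_dec (s j - y) 0) as [h|h].
    - assert (E : s j = y) by lra. unfold v. rewrite E. unfold B. rewrite nroot_0 by lra.
      rewrite Rminus_diag. unfold Rdiv. rewrite Rmult_0_l, Rmult_0_r. lra.
    - assert (0 < B) by (apply nroot_pos; lra). split. unfold Rdiv; apply Rmult_le_pos; [lra|left; apply Rinv_0_lt_compat; lra].
      replace v with (v / B * B) at 1 by (field; lra). apply Rmult_le_compat_r; [lra|apply Rmax_r]. }
  split; [|tauto]. pose proof (Rmax_l (u/A) (v/B)). lra.
Qed.

Lemma charR_thm2 N r xi f q s x j y : (1 <= N)%nat -> 1 < r -> 0 < xi -> ordered_trials q s x ->
  (forall i, (1 <= i <= q)%nat -> 0 <= s i <= 1) ->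
  (forall w, 0 <= w <= 1 -> f y <= f w) ->
  (2 <= j <= q)%nat -> s (j-1)%nat <= y <= s j ->
  Rpower 4 (1 - / INR N) * Kj N f s j y ^ 2 >= Mj N f s j ^ 2 ->
  r * mu N xi f q s j >= Rpower 2 (1 - / INR N) * Kj N f s j y
      + sqrt (Rpower 4 (1 - / INR N) * Kj N f s j y ^ 2 - Mj N f s j ^ 2) ->
  c0N N / (1 + c0N N) * (r * xi * nroot N (dx s j)) <= charR N r xi f q s j + 2 * f y.
Proof.
  intros HN Hr Hxi Ho H01 Hmin Hj Hy C1 C2.
  rewrite lamN_sq in C1, C2. fold (lamN N) in C2.
  pose proof (K_facts N f s j y HN (proj1 Hy) (proj2 Hy)) as KF.
  assert (Hu : 0 <= f (s (j-1)%nat) - f y) by (pose proof (Hmin _ (H01 (j-1)%nat ltac:(lia))); lra).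
  assert (Hv : 0 <= f (s j) - f y) by (pose proof (Hmin _ (H01 j ltac:(lia))); lra).
  destruct (KF Hu Hv) as [HK [Hku Hkv]]. clear KF.
  pose proof (dx_pos q s x j Ho Hj) as Hd. pose proof (nroot_pos N _ Hd) as HD.
  pose proof (mu_ge_xi N xi f q s j) as Hmx.
  set (K := Kj N f s j y) in *. set (M := Mj N f s j) in *.
  set (D := nroot N (dx s j)) in *. set (m := mu N xi f q s j) in *.
  set (L := lamN N) in *. pose proof (lamN_pos N) as HL. fold L in HL.
  set (u := f (s (j-1)%nat) - f y) in *. set (v := f (s j) - f y) in *.
  set (Dl := f (s j) - f (s (j-1)%nat)).
  assert (HMD : M * D = Rabs Dl).
  { unfold M, Mj, D, dx, Dl. rewrite Rabs_minus_sym. field. fold (dx s j). fold D. lra. }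
  set (a := r * m * D).
  assert (Ha : 0 < a) by (unfold a; apply Rmult_lt_0_compat; [nra|auto]).
  assert (Hsq : 0 <= sqrt (L ^ 2 * K ^ 2 - M ^ 2)) by apply sqrt_pos.
  assert (Hss : sqrt (L ^ 2 * K ^ 2 - M ^ 2) * sqrt (L ^ 2 * K ^ 2 - M ^ 2) = L ^ 2 * K ^ 2 - M ^ 2)
    by (apply sqrt_sqrt; lra).
  assert (Q1 : (r * m) ^ 2 - 2 * (r * m) * (L * K) + M ^ 2 >= 0).
  { assert (r * m - L * K >= sqrt (L ^ 2 * K ^ 2 - M ^ 2)) by lra. nra. }
  assert (Q2 : a ^ 2 - 2 * a * (L * K * D) + Dl ^ 2 >= 0).
  { assert (E : Dl ^ 2 = (M * D) ^ 2) by (rewrite HMD; symmetry; apply pow2_abs).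
    rewrite E. unfold a. replace ((r * m * D) ^ 2 - 2 * (r * m * D) * (L * K * D) + (M * D) ^ 2)
      with (((r * m) ^ 2 - 2 * (r * m) * (L * K) + M ^ 2) * D ^ 2) by ring.
    apply Rle_ge, Rmult_le_pos; [lra|]. apply pow_le; lra. }
  set (g := a + Dl ^ 2 / a).
  assert (Hg1 : 2 * (L * K * D) <= g).
  { unfold g. apply Rmult_le_reg_r with a; auto. rewrite Rmult_plus_distr_r.
    replace (Dl ^ 2 / a * a) with (Dl ^ 2) by (field; lra). lra. }
  assert (Hg2 : a <= g).
  { unfold g. assert (0 <= Dl ^ 2 / a) by (unfold Rdiv; apply Rmult_le_pos; [apply pow2_ge_0|left; apply Rinv_0_lt_compat; lra]). lra. }
  assert (HR : charR N r xi f q s j + 2 * f y = g - (u + v)).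
  { unfold charR, g, a, Dl, u, v, m, D. ring. }
  rewrite HR.
  assert (Hnra : nroot N (y - s (j-1)%nat) <= D /\ nroot N (s j - y) <= D).
  { unfold D, dx. split; apply nroot_le; auto; lra. }
  assert (Hkey : c0N N * (u + v) <= g - (u + v)).
  { unfold c0N. destruct (Nat.eq_dec N 1) as [E|E].
    - subst N. assert (EL : L = 1) by (unfold L; apply lamN_1). rewrite EL in Hg1.
      rewrite nroot_1 in Hku, Hkv by lra. unfold D, dx in Hg1. rewrite nroot_1 in Hg1 by lra.
      assert (u + v <= K * (s j - s (j-1)%nat)) by nra. lra.
    - pose proof (lamN_gt1 N ltac:(lia)) as HL1. fold L in HL1.
      assert (u <= K * D) by (eapply Rle_trans; [eauto|]; apply Rmult_le_compat_l; tauto).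
      assert (v <= K * D) by (eapply Rle_trans; [eauto|]; apply Rmult_le_compat_l; tauto).
      assert (L * (u + v) <= L * (2 * (K * D))) by (apply Rmult_le_compat_l; lra).
      fold L. nra. }
  pose proof (c0N_pos N HN) as Hc.
  set (c := c0N N) in *.
  assert (Hrx : r * xi * D <= a) by (unfold a; apply Rmult_le_compat_r; [lra|]; nra).
  assert (c / (1 + c) * a <= g - (u + v)).
  { destruct (Rle_lt_dec (a / (1 + c)) (u + v)) as [h|h].
    - apply Rle_trans with (c * (u + v)); auto.
      replace (c / (1 + c) * a) with (c * (a / (1 + c))) by (field; lra). nra.
    - replace (c / (1 + c) * a) with (a - a / (1 + c)) by (field; lra). lra. }
  apply Rle_trans with (c / (1 + c) * a); auto.
  apply Rmult_le_compat_l; auto. unfold Rdiv; apply Rmult_le_pos; [lra|left; apply Rinv_0_lt_compat; lra].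
Qed.


Definition bin (eta v : R) : nat := Z.to_nat (up (v / eta)).

Lemma up_pos v : 0 <= v -> (0 < up v)%Z.
Proof. intros. destruct (archimed v). apply lt_IZR. simpl. lra. Qed.

Lemma bin_diff eta a b : 0 < eta -> 0 <= a -> 0 <= b -> eta <= Rabs (a - b) -> bin eta a <> bin eta b.
Proof.
  intros He Ha Hb Hab E. unfold bin in E.
  assert (0 <= a / eta) by (unfold Rdiv; apply Rmult_le_pos; [lra|left; apply Rinv_0_lt_compat; lra]).
  assert (0 <= b / eta) by (unfold Rdiv; apply Rmult_le_pos; [lra|left; apply Rinv_0_lt_compat; lra]).
  pose proof (up_pos _ H). pose proof (up_pos _ H0).
  apply Z2Nat.inj in E; try lia.
  destruct (archimed (a / eta)) as [A1 A2]. destruct (archimed (b / eta)) as [B1 B2].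
  rewrite E in A1, A2.
  assert (Rabs (a / eta - b / eta) < 1) by (apply Rabs_def1; lra).
  replace (a / eta - b / eta) with ((a - b) / eta) in H3 by (field; lra).
  unfold Rdiv in H3. rewrite Rabs_mult, Rabs_inv, (Rabs_right eta) in H3 by lra.
  apply Rmult_lt_compat_r with (r := eta) in H3; auto.
  rewrite Rmult_assoc, Rinv_l, Rmult_1_l, Rmult_1_r in H3 by lra. lra.
Qed.

Lemma bin_le eta a : 0 < eta -> 0 <= a <= 1 -> (bin eta a <= bin eta 1)%nat.
Proof.
  intros He Ha. unfold bin.
  assert (0 <= a / eta) by (unfold Rdiv; apply Rmult_le_pos; [lra|left; apply Rinv_0_lt_compat; lra]).
  assert (a / eta <= 1 / eta) by (unfold Rdiv; apply Rmult_le_compat_r; [left; apply Rinv_0_lt_compat|]; lra).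
  pose proof (up_pos _ H). pose proof (up_pos (1/eta) ltac:(lra)).
  destruct (archimed (a / eta)) as [A1 A2]. destruct (archimed (1 / eta)) as [B1 B2].
  assert (IZR (up (a/eta) - up (1/eta)) < 1) by (rewrite minus_IZR; lra).
  apply lt_IZR in H3. apply Z2Nat.inj_le; lia.
Qed.

Lemma sep_contra (x : nat -> R) (P : nat -> Prop) eta : 0 < eta ->
  (forall n, exists k, (n <= k)%nat /\ P k) ->
  (forall k, P k -> (1 <= k)%nat /\ 0 <= x k <= 1 /\
     forall k', (1 <= k' < k)%nat -> eta <= Rabs (x k - x k')) -> False.
Proof.
  intros He Hinf Hsep.
  assert (G : forall M, exists ks, length ks = M /\ NoDup (map (fun k => bin eta (x k)) ks) /\
     forall k, In k ks -> P k).
  { induction M as [|M IH].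
    - exists []. simpl. repeat split; auto. constructor. tauto.
    - destruct IH as [ks [Hl [Hnd Hp]]].
      destruct (Hinf (S (list_max ks))) as [k [Hk Pk]].
      exists (k :: ks). simpl. split; [lia|]. split.
      + constructor; auto. intro Hin. apply in_map_iff in Hin. destruct Hin as [k' [E Hk']].
        pose proof (Hp k' Hk') as Pk'. destruct (Hsep k' Pk') as [H1' [H01' _]].
        destruct (Hsep k Pk) as [H1 [H01 Hs]].
        assert (k' <= list_max ks)%nat.
        { pose proof (proj1 (list_max_le ks (list_max ks)) (le_n _)) as F.
          rewrite Forall_forall in F. auto. }
        apply (bin_diff eta (x k) (x k')); try lra; auto. apply Hs; lia.
      + intros k0 [<-|H]; auto. }
  destruct (G (S (S (bin eta 1)))) as [ks [Hl [Hnd Hp]]].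
  assert (incl (map (fun k => bin eta (x k)) ks) (seq 0 (S (bin eta 1)))).
  { intros b Hb. apply in_map_iff in Hb. destruct Hb as [k [<- Hk]].
    destruct (Hsep k (Hp k Hk)) as [_ [H01 _]]. apply in_seq. pose proof (bin_le eta (x k) He H01). lia. }
  pose proof (NoDup_incl_length Hnd H). rewrite length_map, length_seq in H0. lia.
Qed.


Lemma s01 N r xi f x q xs : (1 <= N)%nat -> 1 < r -> 0 < xi -> plt_run N r xi f x q xs ->
  forall l, (1 <= l)%nat -> forall i, (1 <= i <= q l)%nat -> 0 <= xs l i <= 1.
Proof.
  intros HN Hr Hxi Hrun l Hl i Hi. pose proof Hrun as (_&_&_&_&Hord&_).
  destruct (s_is_trial _ _ _ (Hord l Hl) i Hi) as [k [Hk <-]].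
  apply (trials01 N r xi f x q xs HN Hr Hxi Hrun k); lia.
Qed.

Lemma holder_pos N H f : holder N H f -> holder N (Rmax H 1) f.
Proof.
  intros Hh x1 x2 H1 H2. eapply Rle_trans; [apply Hh; auto|].
  apply Rmult_le_compat_r; [apply nroot_nonneg|apply Rmax_l].
Qed.

Lemma not_limit x y : ~ limit_point x y -> exists eps, 0 < eps /\ exists n, forall k, (n <= k)%nat -> eps <= Rabs (x k - y).
Proof.
  intros H. unfold limit_point in H. apply not_all_ex_not in H. destruct H as [eps H].
  apply imply_to_and in H. destruct H as [He H]. apply not_all_ex_not in H. destruct H as [n H].
  exists eps; split; auto; exists n. intros k Hk. destruct (Rle_lt_dec eps (Rabs (x k - y))); auto.
  exfalso; apply H; eauto.
Qed.

Lemma isolated x y eps n : 0 < eps -> (forall k, (n <= k)%nat -> eps <= Rabs (x k - y)) ->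
  exists d, 0 < d /\ forall k, x k <> y -> d <= Rabs (x k - y).
Proof.
  intros He Hn.
  assert (G : forall m, exists d, 0 < d /\ forall k, (k < m)%nat -> x k <> y -> d <= Rabs (x k - y)).
  { induction m as [|m IH].
    - exists 1; split; [lra|]; intros; lia.
    - destruct IH as [d [Hd IH]].
      destruct (Req_dec (x m) y) as [E|E].
      + exists d; split; auto. intros k Hk Hne. destruct (Nat.eq_dec k m); [subst; tauto|]. apply IH; auto; lia.
      + exists (Rmin d (Rabs (x m - y))). split.
        * apply Rmin_pos; auto. apply Rabs_pos_lt; lra.
        * intros k Hk Hne. destruct (Nat.eq_dec k m); [subst; apply Rmin_r|].
          eapply Rle_trans; [apply Rmin_l|]. apply IH; auto; lia. }
  destruct (G n) as [d [Hd Hg]]. exists (Rmin d eps). split; [apply Rmin_pos; auto|].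
  intros k Hne. destruct (Nat.lt_ge_cases k n).
  - eapply Rle_trans; [apply Rmin_l|]; auto.
  - eapply Rle_trans; [apply Rmin_r|]; auto.
Qed.

Lemma partA N r xi H f x q xs y : (1 <= N)%nat -> 1 < r -> 0 < xi -> holder N H f ->
  plt_run N r xi f x q xs -> global_min f y ->
  (forall L, exists l, (L <= l)%nat /\ (1 <= l)%nat /\ thm2_cond N r xi f (q l) (xs l) y) ->
  limit_point x y.
Proof.
  intros HN Hr Hxi Hh0 Hrun [Hy01 Hmin] Hcond.
  destruct (classic (limit_point x y)) as [|Hnl]; auto. exfalso.
  destruct (not_limit x y Hnl) as [eps [He [n Hn]]].
  destruct (isolated x y eps n He Hn) as [del [Hdel Hiso]].
  pose proof (holder_pos N H f Hh0) as Hh. set (H' := Rmax H 1) in Hh.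
  assert (HH' : 1 <= H') by apply Rmax_r.
  set (C := Rmax H' xi).
  assert (HC : 0 < C) by (unfold C; pose proof (Rmax_l H' xi); lra).
  set (c := c0N N / (1 + c0N N)).
  assert (Hc : 0 < c) by (pose proof (c0N_pos N HN); unfold c; apply Rdiv_lt_0_compat; lra).
  set (gam0 := c * (r * xi * nroot N del)).
  assert (Hg0 : 0 < gam0) by (unfold gam0; pose proof (nroot_pos N del Hdel); apply Rmult_lt_0_compat; auto; apply Rmult_lt_0_compat; auto; nra).
  set (g2 := gam0 / (r * C + H')).
  assert (Hg2 : 0 < g2) by (unfold g2; apply Rdiv_lt_0_compat; [auto|nra]).
  set (eta := (1 - / r) / 2 * g2 ^ N).
  assert (Heta : 0 < eta) by (unfold eta; apply Rmult_lt_0_compat; [apply gpos; auto|apply pow_lt; auto]).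
  pose proof Hrun as (_&_&_&_&Hord&Hst).
  apply (sep_contra x (fun k => exists h, (1 <= h)%nat /\ thm2_cond N r xi f (q h) (xs h) y /\ k = S (q h)) eta Heta).
  - intros n0. destruct (Hcond n0) as [h [Hh1 [Hh2 Hh3]]]. exists (S (q h)). split.
    + pose proof (q_ge _ _ _ _ _ _ _ Hrun h Hh2). lia.
    + exists h; auto.
  - intros k [h [Hh1 [Hc2 ->]]]. split; [lia|]. split; [apply (trials01 N r xi f x q xs); auto; lia|].
    intros k' Hk'.
    set (s := xs h) in *. set (qh := q h) in *.
    pose proof (Hord h Hh1) as Ho. fold s qh in Ho.
    pose proof (s01 N r xi f x q xs HN Hr Hxi Hrun h Hh1) as H01. fold s qh in H01.
    destruct (Hst h Hh1) as [Hp [t [Ht Hx]]]. fold s qh in Ht, Hx.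
    destruct (Ht 1%nat ltac:(lia)) as [Ht1 [_ Hmax]].
    specialize (Hx 1%nat ltac:(lia)). replace (qh + 1)%nat with (S qh) in Hx by lia. rewrite Hx.
    destruct Hc2 as [j [Hj [Hyj [C1 C2]]]].
    pose proof (charR_thm2 N r xi f qh s x j y HN Hr Hxi Ho H01 Hmin Hj Hyj C1 C2) as HRj.
    assert (Hdj : del <= dx s j).
    { unfold dx. pose proof (ord_lt qh s x Ho (j-1) j ltac:(lia) ltac:(lia) ltac:(lia)).
      destruct (s_is_trial _ _ _ Ho j ltac:(lia)) as [k2 [_ E2]].
      destruct (s_is_trial _ _ _ Ho (j-1)%nat ltac:(lia)) as [k1 [_ E1]].
      destruct (Req_dec (s j) y) as [E|E].
      - assert (x k1 <> y) by (rewrite E1; lra). pose proof (Hiso k1 H1).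
        rewrite E1, Rabs_left1 in H2 by lra. lra.
      - assert (x k2 <> y) by (rewrite E2; lra). pose proof (Hiso k2 H1).
        rewrite E2, Rabs_right in H2 by lra. lra. }
    assert (HRj2 : gam0 <= charR N r xi f qh s j + 2 * f y).
    { eapply Rle_trans; [|apply HRj]. unfold gam0. fold c. apply Rmult_le_compat_l; [lra|].
      apply Rmult_le_compat_l; [nra|]. apply nroot_le; auto. lra. }
    pose proof (Hmax j Hj ltac:(intros; lia)) as Hjt.
    pose proof (charR_upper N r xi H' f qh s x (t 1%nat) HN Hr Hxi ltac:(lra) Ho H01 Hh Ht1) as Hup.
    fold C in Hup.
    pose proof (Hmin _ (H01 (t 1%nat) ltac:(lia))). pose proof (Hmin _ (H01 (t 1%nat - 1)%nat ltac:(lia))).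
    assert (HD : g2 <= nroot N (dx s (t 1%nat))).
    { unfold g2. apply Rmult_le_reg_r with (r * C + H'); [nra|].
      unfold Rdiv. rewrite Rmult_assoc, Rinv_l, Rmult_1_r by nra. nra. }
    assert (Hdx : g2 ^ N <= dx s (t 1%nat)).
    { rewrite <- (nroot_pow N (dx s (t 1%nat))) by (auto; left; eapply dx_pos; eauto).
      apply pow_incr; lra. }
    pose proof (newpt_loc N r xi f qh s x (t 1%nat) HN Hr Hxi Ho Ht1) as Hloc.
    pose proof (trial_outside qh s x Ho (t 1%nat) k' Ht1 ltac:(lia)) as Hout.
    assert (eta <= (1 - / r) / 2 * dx s (t 1%nat)).
    { unfold eta. apply Rmult_le_compat_l; [left; apply gpos; auto|auto]. }
    unfold dx in *. destruct Hout as [Ho1|Ho1].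
    + rewrite Rabs_right by lra. lra.
    + rewrite Rabs_left1 by lra. lra.
Qed.


Definition clamp (v : R) : R := Rmax 0 (Rmin v 1).

Lemma clamp_in v : 0 <= clamp v <= 1.
Proof. unfold clamp, Rmax, Rmin; repeat destruct Rle_dec; lra. Qed.

Lemma clamp_id v : 0 <= v <= 1 -> clamp v = v.
Proof. intros; unfold clamp, Rmax, Rmin; repeat destruct Rle_dec; lra. Qed.

Lemma clamp_lip a b : Rabs (clamp a - clamp b) <= Rabs (a - b).
Proof.
  unfold clamp, Rmax, Rmin; repeat destruct Rle_dec; unfold Rabs; repeat destruct Rcase_abs; lra.
Qed.

Lemma exists_min N H f : (1 <= N)%nat -> holder N H f -> exists m, global_min f m.
Proof.
  intros HN Hh0. pose proof (holder_pos N H f Hh0) as Hh. set (H' := Rmax H 1) in Hh.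
  assert (HH' : 1 <= H') by apply Rmax_r.
  set (g := fun v => f (clamp v)).
  assert (Hc : forall c, continuity_pt g c).
  { intros c. unfold continuity_pt, continue_in, limit1_in, limit_in. simpl. unfold R_dist.
    intros eps Heps. exists ((eps / (2 * H')) ^ N). split.
    { apply pow_lt. apply Rdiv_lt_0_compat; lra. }
    intros v [_ Hv]. unfold g.
    pose proof (Hh (clamp v) (clamp c) (clamp_in v) (clamp_in c)).
    pose proof (clamp_lip v c).
    assert (nroot N (Rabs (clamp v - clamp c)) <= eps / (2 * H')).
    { rewrite <- (nroot_of_pow N (eps / (2 * H'))) by (auto; left; apply Rdiv_lt_0_compat; lra).
      apply nroot_le; auto. split; [apply Rabs_pos|lra]. }
    assert (H' * nroot N (Rabs (clamp v - clamp c)) <= H' * (eps / (2 * H'))) by (apply Rmult_le_compat_l; lra).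
    replace (H' * (eps / (2 * H'))) with (eps / 2) in H3 by (field; lra). lra. }
  destruct (continuity_ab_min g 0 1 ltac:(lra) (fun c _ => Hc c)) as [m [Hm Hm01]].
  exists m. split; auto. intros w Hw. pose proof (Hm w Hw). unfold g in H0.
  rewrite !clamp_id in H0 by auto. auto.
Qed.

Lemma limit_in01 N r xi f x q xs y : (1 <= N)%nat -> 1 < r -> 0 < xi -> plt_run N r xi f x q xs ->
  limit_point x y -> 0 <= y <= 1.
Proof.
  intros HN Hr Hxi Hrun Hl. split.
  - destruct (Rle_lt_dec 0 y); auto. destruct (Hl (- y) ltac:(lra) 1%nat) as [k [Hk Hx]].
    pose proof (trials01 N r xi f x q xs HN Hr Hxi Hrun k Hk). unfold Rabs in Hx; destruct Rcase_abs in Hx; lra.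
  - destruct (Rle_lt_dec y 1); auto. destruct (Hl (y - 1) ltac:(lra) 1%nat) as [k [Hk Hx]].
    pose proof (trials01 N r xi f x q xs HN Hr Hxi Hrun k Hk). unfold Rabs in Hx; destruct Rcase_abs in Hx; lra.
Qed.

Lemma newpt_outside N r xi f q s x j j' : (1 <= N)%nat -> 1 < r -> 0 < xi -> ordered_trials q s x ->
  (2 <= j <= q)%nat -> (2 <= j' <= q)%nat -> j <> j' ->
  newpt N r xi f q s j' <= s (j-1)%nat \/ s j <= newpt N r xi f q s j'.
Proof.
  intros HN Hr Hxi Ho Hj Hj' Hne.
  pose proof (newpt_strict N r xi f q s x j' HN Hr Hxi Ho Hj').
  destruct (Nat.lt_gt_cases j j') as [[h|h] _]; auto.
  - right. pose proof (ord_le q s x Ho j (j'-1) ltac:(lia) ltac:(lia) ltac:(lia)); lra.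
  - left. pose proof (ord_le q s x Ho j' (j-1) ltac:(lia) ltac:(lia) ltac:(lia)); lra.
Qed.


Lemma good_points N r xi H f x q xs xst m : (1 <= N)%nat -> 1 < r -> 0 < xi -> holder N H f -> 0 < H ->
  plt_run N r xi f x q xs -> 0 <= xst <= 1 -> limit_point x xst -> forall B, 0 < B ->
  exists W n, length W = m /\ NoDup W /\ forall w, In w W ->
    (exists k, (1 <= k <= n)%nat /\ x k = w) /\ 0 < w /\ f w <= f xst + H * B.
Proof.
  intros HN Hr Hxi Hh HH Hrun Hx01 Hlim B HB.
  induction m as [|m IH].
  - exists [], 0%nat. repeat split; auto. constructor. tauto. tauto. tauto.
  - destruct IH as [W [n [Hl [Hnd HW]]]].
    destruct (Hlim (B ^ N) (pow_lt _ _ HB) (S (Nat.max n (q 1%nat)))) as [k [Hk Hxk]].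
    destruct (new_distinct N r xi f x q xs HN Hr Hxi Hrun k ltac:(lia)) as [Hpos Hdist].
    exists (x k :: W), k. split; [simpl; lia|]. split.
    + constructor; auto. intro Hin. destruct (HW _ Hin) as [[k'' [Hk'' E]] _].
      apply (Hdist k'' ltac:(lia)). auto.
    + intros w [<-|Hw].
      * split; [exists k; split; [lia|auto]|]. split; auto.
        pose proof (trials01 N r xi f x q xs HN Hr Hxi Hrun k ltac:(lia)).
        pose proof (Hh (x k) xst H0 Hx01).
        assert (nroot N (Rabs (x k - xst)) <= B).
        { rewrite <- (nroot_of_pow N B) by (auto; lra). apply nroot_le; auto. split; [apply Rabs_pos|lra]. }
        assert (H * nroot N (Rabs (x k - xst)) <= H * B) by (apply Rmult_le_compat_l; lra).
        pose proof (Rle_abs (f (x k) - f xst)). lra.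
      * destruct (HW w Hw) as [[k'' [Hk'' E]] R]. split; auto. exists k''; split; [lia|auto].
Qed.


Lemma partB N r xi H Q f x q xs y : (1 <= N)%nat -> 1 < r -> 0 < xi -> holder N H f ->
  plt_run N r xi f x q xs ->
  (forall l, (1 <= l)%nat -> (q (S l) - q l <= Q)%nat) ->
  (forall xst, global_min f xst ->
     forall L, exists l, (L <= l)%nat /\ (1 <= l)%nat /\ thm2_cond N r xi f (q l) (xs l) xst) ->
  limit_point x y -> global_min f y.
Proof.
  intros HN Hr Hxi Hh0 Hrun HQ Hcond Hly.
  pose proof (limit_in01 N r xi f x q xs y HN Hr Hxi Hrun Hly) as Hy01.
  destruct (exists_min N H f HN Hh0) as [xst Hxst].
  pose proof (partA N r xi H f x q xs xst HN Hr Hxi Hh0 Hrun Hxst (Hcond xst Hxst)) as Hlx.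
  split; auto. intros w Hw.
  destruct Hxst as [Hx01 Hxmin].
  destruct (Rle_lt_dec (f y) (f xst)) as [Hle|Hgt].
  { pose proof (Hxmin w Hw); lra. }
  exfalso. set (Df := f y - f xst). assert (HDf : 0 < Df) by (unfold Df; lra).
  pose proof (holder_pos N H f Hh0) as Hh. set (H' := Rmax H 1) in Hh.
  assert (HH' : 1 <= H') by apply Rmax_r.
  set (C := Rmax H' xi).
  assert (HC : 0 < C) by (unfold C; pose proof (Rmax_l H' xi); lra).
  destruct (good_points N r xi H' f x q xs xst Q HN Hr Hxi Hh ltac:(lra) Hrun Hx01 Hlx (Df / (4 * H')) ltac:(apply Rdiv_lt_0_compat; lra))
    as [W [n0 [HWl [HWnd HW]]]].
  replace (H' * (Df / (4 * H'))) with (Df / 4) in HW by (field; lra).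
  set (L0 := Nat.max n0 1).
  set (e0 := Df / (2 * (r * C + 3 * H'))).
  assert (He0 : 0 < e0) by (unfold e0; apply Rdiv_lt_0_compat; nra).
  set (d2 := e0 ^ N / 2).
  assert (Hd2 : 0 < d2) by (unfold d2; pose proof (pow_lt e0 N He0); lra).
  assert (Hne0 : nroot N (2 * d2) = e0) by (unfold d2; replace (2 * (e0 ^ N / 2)) with (e0 ^ N) by field; apply nroot_of_pow; auto; lra).
  set (eta := (1 - / r) / 2 * d2).
  assert (Heta : 0 < eta) by (unfold eta; apply Rmult_lt_0_compat; [apply gpos; auto|auto]).
  pose proof Hrun as (_&_&_&_&Hord&Hst).
  apply (sep_contra x (fun k => (q L0 < k)%nat /\ Rabs (x k - y) < d2) eta Heta).
  - intros n. destruct (Hly d2 Hd2 (Nat.max n (S (q L0)))) as [k [Hk Hxk]]. exists k. split; [lia|split; [lia|auto]].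
  - intros k [HkL Hky].
    assert (Hq1 : (q 1%nat <= q L0)%nat) by (apply (q_mono _ _ _ _ _ _ _ Hrun); lia).
    destruct (time_of _ _ _ _ _ _ _ Hrun k ltac:(lia)) as [l [Hl Hkl]].
    assert (HlL : (L0 <= l)%nat).
    { destruct (Nat.le_gt_cases L0 l); auto. pose proof (q_mono _ _ _ _ _ _ _ Hrun (S l) L0 ltac:(lia) ltac:(lia)). lia. }
    split; [lia|]. split; [apply (trials01 N r xi f x q xs HN Hr Hxi Hrun k); lia|].
    set (s := xs l) in *. set (ql := q l) in *.
    pose proof (Hord l Hl) as Ho. fold s ql in Ho.
    pose proof (s01 N r xi f x q xs HN Hr Hxi Hrun l Hl) as H01. fold s ql in H01.
    destruct (Hst l Hl) as [Hp [t [Ht Hx]]]. fold s ql in Ht, Hx, Hp.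
    set (kk := (k - ql)%nat).
    destruct (Ht kk ltac:(unfold kk; lia)) as [Htk [Hdis Hmax]].
    pose proof (Hx kk ltac:(unfold kk; lia)) as Hxk. replace (ql + kk)%nat with k in Hxk by (unfold kk; lia).
    set (tk := t kk) in *.
    pose proof (newpt_loc N r xi f ql s x tk HN Hr Hxi Ho Htk) as Hloc.
    pose proof (gpos r Hr) as Hgp.
    pose proof (dx_pos ql s x tk Ho Htk) as Hdxp.
    destruct (Rle_lt_dec d2 (dx s tk)) as [Hlong|Hshort].
    +
      intros k' Hk'.
      assert (Hg : eta <= (1 - / r) / 2 * dx s tk) by (unfold eta; apply Rmult_le_compat_l; lra).
      assert (Hout : x k' <= s (tk - 1)%nat \/ s tk <= x k').
      { destruct (Nat.le_gt_cases k' ql) as [h|h].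
        - apply (trial_outside ql s x Ho tk k' Htk). lia.
        - destruct (Ht (k' - ql)%nat ltac:(lia)) as [Htk' _].
          pose proof (Hx (k' - ql)%nat ltac:(lia)) as Hxk'. replace (ql + (k' - ql))%nat with k' in Hxk' by lia.
          rewrite Hxk'. apply (newpt_outside N r xi f ql s x tk (t (k' - ql)%nat)); auto.
          intro E. apply (Hdis (k' - ql)%nat); [unfold kk; lia|]. auto. }
      rewrite Hxk. unfold dx in *. destruct Hout as [Ho1|Ho1].
      * rewrite Rabs_right by lra. lra.
      * rewrite Rabs_left1 by lra. lra.
    +
      exfalso.
      assert (HDt : nroot N (dx s tk) <= e0).
      { rewrite <- Hne0. apply nroot_le; auto; lra. }
      pose proof (charR_upper N r xi H' f ql s x tk HN Hr Hxi ltac:(lra) Ho H01 Hh Htk) as Hup. fold C in Hup.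
      assert (Hend : forall e, (e = s tk \/ e = s (tk - 1)%nat) -> f y - H' * e0 <= f e).
      { intros e He.
        assert (He01 : 0 <= e <= 1) by (destruct He as [->| ->]; apply H01; lia).
        pose proof (Hh e y He01 Hy01) as Hhe.
        assert (Rabs (e - y) <= 2 * d2).
        { rewrite Hxk in Hky. assert (0 <= (1 - / r)/2 * dx s tk) by (apply Rmult_le_pos; lra).
          unfold dx in *. apply Rabs_def2 in Hky.
          destruct He as [-> | ->]; apply Rabs_le; split; lra. }
        assert (nroot N (Rabs (e - y)) <= e0) by (rewrite <- Hne0; apply nroot_le; auto; split; [apply Rabs_pos|lra]).
        assert (H' * nroot N (Rabs (e - y)) <= H' * e0) by (apply Rmult_le_compat_l; lra).
        rewrite Rabs_minus_sym in Hhe. pose proof (Rle_abs (f y - f e)). lra. }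
      pose proof (Hend (s tk) (or_introl eq_refl)). pose proof (Hend (s (tk - 1)%nat) (or_intror eq_refl)).
      assert (HRt : charR N r xi f ql s tk <= - 2 * f y + Df / 2).
      { assert ((r * C + H') * nroot N (dx s tk) <= (r * C + H') * e0) by (apply Rmult_le_compat_l; nra).
        assert (E : (r * C + 3 * H') * e0 = Df / 2) by (unfold e0; field; nra). nra. }
      assert (Hs1 : s 1%nat <= 0).
      { destruct (trial_is_s ql s x Ho 1%nat ltac:(lia)) as [i0 [Hi0 E0]].
        pose proof Hrun as (_&Hx1&_). rewrite Hx1 in E0. rewrite <- E0. apply (ord_le ql s x Ho); lia. }
      assert (Hincl : incl W (map (fun k' => s (t k')) (seq 1 (kk - 1)))).
      { intros wv Hwv. destruct (HW wv Hwv) as [[kw [Hkw Ew]] [Hwpos Hwf]].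
        assert (Hkw2 : (kw <= ql)%nat).
        { pose proof (q_ge _ _ _ _ _ _ _ Hrun L0 ltac:(lia)). pose proof (q_mono _ _ _ _ _ _ _ Hrun L0 l ltac:(lia) HlL).
          unfold ql; lia. }
        destruct (trial_is_s ql s x Ho kw ltac:(lia)) as [i [Hi Ei]].
        assert (Hi2 : (2 <= i)%nat).
        { destruct (Nat.eq_dec i 1); [|lia]. subst i. rewrite Ew in Ei. lra. }
        pose proof (charR_lower N r xi f ql s x i HN Hr Hxi Ho ltac:(lia)) as HRi.
        rewrite Ei, Ew in HRi.
        assert (HRit : charR N r xi f ql s tk < charR N r xi f ql s i) by (unfold Df in *; lra).
        destruct (classic (exists k', (1 <= k' < kk)%nat /\ t k' = i)) as [[k' [Hk' Et]]|Hno].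
        - apply in_map_iff. exists k'. split; [rewrite Et; congruence|]. apply in_seq. lia.
        - exfalso. assert (charR N r xi f ql s i <= charR N r xi f ql s tk).
          { apply Hmax; [lia|]. intros k' Hk' E. apply Hno; eauto. }
          lra. }
      pose proof (NoDup_incl_length HWnd Hincl) as Hlen. rewrite length_map, length_seq in Hlen.
      pose proof (HQ l Hl). unfold kk in *. fold ql in H2. lia.
Qed.


Theorem corollary2 (N : nat) (r xi H : R) (Q : nat) (f : R -> R)
    (x : nat -> R) (q : nat -> nat) (xs : nat -> nat -> R) :
  (1 <= N)%nat -> 1 < r -> 0 < xi ->
  holder N H f ->
  plt_run N r xi f x q xs ->
  (forall l, (1 <= l)%nat -> (q (S l) - q l <= Q)%nat) ->
  (forall xst, global_min f xst ->
     forall L, exists l, (L <= l)%nat /\ (1 <= l)%nat /\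
       thm2_cond N r xi f (q l) (xs l) xst) ->
  forall y, limit_point x y <-> global_min f y.
Proof.
  intros HN Hr Hxi Hh Hrun HQ Hcond y. split.
  - apply (partB N r xi H Q f x q xs y HN Hr Hxi Hh Hrun HQ Hcond).
  - intros Hy. apply (partA N r xi H f x q xs y HN Hr Hxi Hh Hrun Hy (Hcond y Hy)).
Qed.
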